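(* Let $\theta\in\mathbb{R}\setminus\pi\mathbb{Q}$, $\mu\in\mathbb{C}\setminus\{0,1\}$ and $a,b\in\mathbb{C}^n$ with $a\neq b$. If $G$ is the group generated by $f=(a,e^{i\theta})$ and $g=(b,\mu)$, then $\overline{G(a)}=\mathbb{C}(b-a)+a=\{a+t(b-a):t\in\mathbb{C}\}$.
   Context: For $c\in\mathbb{C}^n$ and $\nu\in\mathbb{C}\setminus\{0,1\}$, $(c,\nu)$ denotes the map $z\mapsto\nu(z-c)+c$ of $\mathbb{C}^n$. $G(z)=\{h(z):h\in G\}$. *)

(* Defs.v *)
From Stdlib Require Import Reals Lra.
From Stdlib Require Vectors.Fin.
Open Scope R_scope.

(* The complex numbers Cplx = R x R (named to avoid clash with Reals binomial C). *)
Definition Cplx : Type := (R * R)%type.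
Definition Cplx0 : Cplx := (0, 0).
Definition Cplx1 : Cplx := (1, 0).
Definition Cadd (z w : Cplx) : Cplx := (fst z + fst w, snd z + snd w).
Definition Copp (z : Cplx) : Cplx := (- fst z, - snd z).
Definition Csub (z w : Cplx) : Cplx := Cadd z (Copp w).
Definition Cmul (z w : Cplx) : Cplx :=
  (fst z * fst w - snd z * snd w, fst z * snd w + snd z * fst w).
Definition Cinv (z : Cplx) : Cplx :=
  (fst z / (fst z ^ 2 + snd z ^ 2), - snd z / (fst z ^ 2 + snd z ^ 2)).
Definition Cmod (z : Cplx) : R := sqrt (fst z ^ 2 + snd z ^ 2).
Definition Cexpi (theta : R) : Cplx := (cos theta, sin theta).

Definition Cn (n : nat) : Type := Fin.t n -> Cplx.
Definition vadd {n} (u v : Cn n) : Cn n := fun i => Cadd (u i) (v i).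
Definition vsub {n} (u v : Cn n) : Cn n := fun i => Csub (u i) (v i).
Definition vscal {n} (t : Cplx) (v : Cn n) : Cn n := fun i => Cmul t (v i).

(* The map (c, nu) : z |-> nu (z - c) + c of Cplx^n. *)
Definition homothety {n} (c : Cn n) (nu : Cplx) (z : Cn n) : Cn n :=
  vadd (vscal nu (vsub z c)) c.

(* The group generated by (c1,nu1) and (c2,nu2): all finite compositions of
   the generators and their inverses (c,nu)^{-1} = (c,nu^{-1}). *)
Inductive gen_group {n} (c1 : Cn n) (nu1 : Cplx) (c2 : Cn n) (nu2 : Cplx)
  : (Cn n -> Cn n) -> Prop :=
| gg_id : gen_group c1 nu1 c2 nu2 (fun z => z)
| gg_f : forall h, gen_group c1 nu1 c2 nu2 h ->
    gen_group c1 nu1 c2 nu2 (fun z => homothety c1 nu1 (h z))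
| gg_finv : forall h, gen_group c1 nu1 c2 nu2 h ->
    gen_group c1 nu1 c2 nu2 (fun z => homothety c1 (Cinv nu1) (h z))
| gg_g : forall h, gen_group c1 nu1 c2 nu2 h ->
    gen_group c1 nu1 c2 nu2 (fun z => homothety c2 nu2 (h z))
| gg_ginv : forall h, gen_group c1 nu1 c2 nu2 h ->
    gen_group c1 nu1 c2 nu2 (fun z => homothety c2 (Cinv nu2) (h z)).

Definition orbit {n} (G : (Cn n -> Cn n) -> Prop) (z : Cn n) : Cn n -> Prop :=
  fun w => exists h, G h /\ w = h z.

(* Topological closure in Cplx^n (product topology, via sup-norm balls). *)
Definition closure {n} (S : Cn n -> Prop) : Cn n -> Prop :=
  fun z => forall eps, 0 < eps ->
    exists w, S w /\ forall i, Cmod (Csub (z i) (w i)) < eps.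

Definition not_in_piQ (theta : R) : Prop :=
  forall p q : Z, q <> 0%Z -> theta * IZR q <> PI * IZR p.

(* Main.v *)
Require Import Defs.
From Stdlib Require Import Reals Lra Lia Psatz ZArith Field Ring.
From Stdlib Require Import FunctionalExtensionality Classical.
Open Scope R_scope.

Lemma Cplx_eq (z w : Cplx) : fst z = fst w -> snd z = snd w -> z = w.
Proof. destruct z, w; simpl; intros; subst; reflexivity. Qed.

Definition Cdiv (x y : Cplx) := Cmul x (Cinv y).

Ltac cdes := repeat match goal with p : Cplx |- _ => destruct p end.

Lemma Cring : ring_theory Cplx0 Cplx1 Cadd Cmul Csub Copp (@eq Cplx).
Proof.
  constructor; intros; cdes; apply Cplx_eq;
  unfold Cadd, Cmul, Csub, Copp, Cplx0, Cplx1; simpl; ring.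
Qed.

Lemma Cnz (z : Cplx) : z <> Cplx0 -> fst z ^ 2 + snd z ^ 2 <> 0.
Proof.
  destruct z as [x y]; simpl; intros H E; apply H; unfold Cplx0.
  assert (x = 0) by nra. assert (y = 0) by nra. subst; reflexivity.
Qed.

Lemma Cfield : field_theory Cplx0 Cplx1 Cadd Cmul Csub Copp Cdiv Cinv (@eq Cplx).
Proof.
  constructor.
  - exact Cring.
  - unfold Cplx1, Cplx0; intro H; inversion H; lra.
  - reflexivity.
  - intros p Hp; pose proof (Cnz p Hp) as D; destruct p as [x y]; simpl in D.
    apply Cplx_eq; unfold Cmul, Cinv, Cplx1; simpl; field; lra.

Qed.

Add Field Cfld : Cfield.

Definition L {n} (a b : Cn n) (t : Cplx) : Cn n := vadd (vscal t (vsub b a)) a.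
Definition gmap (nu t : Cplx) : Cplx := Cadd (Cmul nu (Csub t Cplx1)) Cplx1.

Lemma H1 {n} (a b : Cn n) nu t : homothety a nu (L a b t) = L a b (Cmul nu t).
Proof.
  unfold homothety, L, vadd, vscal, vsub; apply functional_extensionality; intro i.
  ring.
Qed.

Lemma H2 {n} (a b : Cn n) nu t : homothety b nu (L a b t) = L a b (gmap nu t).
Proof.
  unfold homothety, L, gmap, vadd, vscal, vsub; apply functional_extensionality; intro i.
  ring.
Qed.

Lemma L0 {n} (a b : Cn n) : L a b Cplx0 = a.
Proof.
  unfold L, vadd, vscal, vsub; apply functional_extensionality; intro i. ring.
Qed.

Definition Tset {n} (a b : Cn n) om mu (t : Cplx) : Prop :=
  orbit (gen_group a om b mu) a (L a b t).

Lemma T0 {n} (a b : Cn n) om mu : Tset a b om mu Cplx0.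
Proof. exists (fun z => z); split; [constructor | now rewrite L0]. Qed.

Lemma Trot {n} (a b : Cn n) om mu t : Tset a b om mu t -> Tset a b om mu (Cmul om t).
Proof. intros [h [Hh E]]. eexists; split; [apply gg_f, Hh|]. simpl. rewrite <- E, H1; auto. Qed.
Lemma Troti {n} (a b : Cn n) om mu t : Tset a b om mu t -> Tset a b om mu (Cmul (Cinv om) t).
Proof. intros [h [Hh E]]. eexists; split; [apply gg_finv, Hh|]. simpl. rewrite <- E, H1; auto. Qed.
Lemma Tg {n} (a b : Cn n) om mu t : Tset a b om mu t -> Tset a b om mu (gmap mu t).
Proof. intros [h [Hh E]]. eexists; split; [apply gg_g, Hh|]. simpl. rewrite <- E, H2; auto. Qed.
Lemma Tgi {n} (a b : Cn n) om mu t : Tset a b om mu t -> Tset a b om mu (gmap (Cinv mu) t).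
Proof. intros [h [Hh E]]. eexists; split; [apply gg_ginv, Hh|]. simpl. rewrite <- E, H2; auto. Qed.

Lemma Gline {n} (a b : Cn n) om mu h : gen_group a om b mu h -> exists t, h a = L a b t.
Proof.
  induction 1 as [|h _ [t E]|h _ [t E]|h _ [t E]|h _ [t E]].
  - exists Cplx0; now rewrite L0.
  - exists (Cmul om t); now rewrite E, H1.
  - exists (Cmul (Cinv om) t); now rewrite E, H1.
  - exists (gmap mu t); now rewrite E, H2.
  - exists (gmap (Cinv mu) t); now rewrite E, H2.
Qed.

Definition tv (om mu : Cplx) := Cmul (Cinv mu) (Cmul (Csub Cplx1 mu) (Csub om Cplx1)).

Lemma Tplus {n} (a b : Cn n) om mu t : om <> Cplx0 -> mu <> Cplx0 ->
  Tset a b om mu t -> Tset a b om mu (Cadd t (tv om mu)).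
Proof.
  intros Ho Hm H.
  apply Troti, Tg, Trot, Tgi in H.
  replace (Cadd t (tv om mu)) with (gmap (Cinv mu) (Cmul om (gmap mu (Cmul (Cinv om) t)))); auto.
  unfold gmap, tv. field. auto.
Qed.

Lemma Tminus {n} (a b : Cn n) om mu t : om <> Cplx0 -> mu <> Cplx0 ->
  Tset a b om mu t -> Tset a b om mu (Csub t (tv om mu)).
Proof.
  intros Ho Hm H.
  apply Tg, Troti, Tgi, Trot in H.
  replace (Csub t (tv om mu)) with (Cmul om (gmap (Cinv mu) (Cmul (Cinv om) (gmap mu t)))); auto.
  unfold gmap, tv. field. auto.
Qed.
Lemma pigeon : forall N (f : nat -> nat), (forall i, (i <= N)%nat -> (f i < N)%nat) ->
  exists i j, (i < j <= N)%nat /\ f i = f j.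
Proof.
  induction N as [|N IH]; intros f Hf.
  - specialize (Hf 0%nat (le_n 0)); lia.
  - destruct (classic (exists i, (i <= N)%nat /\ f i = f (S N))) as [[i [Hi E]]|Hno0].
    + exists i, (S N); split; [lia|auto].
    + assert (Hno : forall i, (i <= N)%nat -> f i <> f (S N)) by (intros i Hi E; apply Hno0; eauto).
      set (g := fun i => if Nat.ltb (f i) (f (S N)) then f i else Nat.pred (f i)).
      destruct (IH g) as [i [j [Hij E]]].
      * intros i Hi; unfold g. pose proof (Hf i ltac:(lia)). pose proof (Hf (S N) ltac:(lia)).
        pose proof (Hno i Hi).
        destruct (Nat.ltb_spec (f i) (f (S N))); lia.
      * exists i, j; split; [lia|]. unfold g in E.
        pose proof (Hno i ltac:(lia)); pose proof (Hno j ltac:(lia)).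
        destruct (Nat.ltb_spec (f i) (f (S N))), (Nat.ltb_spec (f j) (f (S N))); lia.
Qed.

Lemma Ipart_bounds r : IZR (Int_part r) <= r /\ r < IZR (Int_part r) + 1.
Proof. destruct (base_Int_part r); lra. Qed.

Lemma dirichlet th N : (1 <= N)%nat -> exists (q : nat) (p : Z),
  (1 <= q)%nat /\ Rabs (INR q * th - 2 * PI * IZR p) < 2 * PI / INR N.
Proof.
  intros HN.
  pose proof PI_RGT_0 as Hpi.
  assert (HNr : 0 < INR N) by (apply lt_0_INR; lia).
  set (x := fun k : nat => INR k * th / (2 * PI)).
  set (fr := fun k => x k - IZR (Int_part (x k))).
  assert (Hfr : forall k, 0 <= fr k < 1).
  { intro k; unfold fr; destruct (Ipart_bounds (x k)); lra. }
  set (J := fun k => Int_part (INR N * fr k)).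
  assert (HJ : forall k, (0 <= J k < Z.of_nat N)%Z).
  { intro k. destruct (Ipart_bounds (INR N * fr k)) as [B1 B2]. specialize (Hfr k).
    assert (0 <= INR N * fr k) by nra. assert (INR N * fr k < INR N) by nra.
    change (Int_part (INR N * fr k)) with (J k) in B1, B2.
    rewrite INR_IZR_INZ in *. split.
    - assert (-1 < J k)%Z; [apply lt_IZR; lra | lia].
    - apply lt_IZR; lra. }
  destruct (pigeon N (fun k => Z.to_nat (J k))) as [i [j [Hij E]]].
  { intros i _; specialize (HJ i); lia. }
  assert (EJ : J i = J j) by (pose proof (HJ i); pose proof (HJ j); lia).
  exists (j - i)%nat, (Int_part (x j) - Int_part (x i))%Z. split; [lia|].
  destruct (Ipart_bounds (INR N * fr i)) as [A1 A2].
  destruct (Ipart_bounds (INR N * fr j)) as [B1 B2].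
  change (Int_part (INR N * fr i)) with (J i) in A1, A2.
  change (Int_part (INR N * fr j)) with (J j) in B1, B2. rewrite EJ in A1, A2.
  assert (Hy : Rabs (INR N * fr j - INR N * fr i) < 1) by (apply Rabs_def1; lra).
  assert (Eq : INR (j - i) * th - 2 * PI * IZR (Int_part (x j) - Int_part (x i))
              = 2 * PI / INR N * (INR N * fr j - INR N * fr i)).
  { rewrite minus_INR by lia. rewrite minus_IZR. unfold fr, x. field. lra. }
  rewrite Eq, Rabs_mult, (Rabs_pos_eq (2 * PI / INR N)).
  - assert (0 < 2 * PI / INR N) by (apply Rdiv_lt_0_compat; lra).
    replace (2 * PI / INR N) with (2 * PI / INR N * 1) at 2 by ring.
    apply Rmult_lt_compat_l; auto.
  - left; apply Rdiv_lt_0_compat; lra.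
Qed.

Lemma Zper (P : R -> R) : (forall x k, P (x + 2 * INR k * PI) = P x) ->
  forall x (p : Z), P (x + 2 * IZR p * PI) = P x.
Proof.
  intros HP x p. destruct (Z_le_gt_dec 0 p) as [Hp|Hp].
  - rewrite <- (Z2Nat.id p Hp), <- INR_IZR_INZ. apply HP.
  - replace p with (- Z.of_nat (Z.to_nat (- p)))%Z by lia.
    rewrite opp_IZR, <- INR_IZR_INZ.
    set (k := Z.to_nat (- p)).
    rewrite <- (HP (x + 2 * - INR k * PI) k). f_equal. ring.
Qed.


Lemma small_rot th : not_in_piQ th -> forall eta, 0 < eta -> exists q : nat,
  sin (INR q * th) <> 0 /\ Rabs (sin (INR q * th)) < eta /\ Rabs (cos (INR q * th) - 1) < eta.
Proof.
  intros Hth eta Heta.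
  pose proof PI_RGT_0 as Hpi. pose proof PI2_3_2 as Hpi2.
  set (m := Rmin eta 1).
  assert (Hm : 0 < m) by (unfold m; apply Rmin_glb_lt; lra).
  assert (Hm1 : m <= 1) by apply Rmin_r.
  assert (Hme : m <= eta) by apply Rmin_l.
  destruct (archimed (2 * PI / m)) as [A1 _].
  assert (Hpos : 0 < 2 * PI / m) by (apply Rdiv_lt_0_compat; lra).
  set (N := Z.to_nat (up (2 * PI / m))).
  assert (HNe : INR N = IZR (up (2 * PI / m))).
  { unfold N. rewrite INR_IZR_INZ, Z2Nat.id; auto. apply le_IZR; lra. }
  assert (HN : (1 <= N)%nat).
  { assert (0 < INR N) by lra. assert (N <> 0%nat) by (intro E; rewrite E in H; simpl in H; lra). lia. }
  destruct (dirichlet th N HN) as [q [p [Hq Hd]]].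
  exists q.
  set (phi := INR q * th - 2 * PI * IZR p) in Hd.
  assert (Hphi : Rabs phi < m).
  { eapply Rlt_trans; [exact Hd|].
    assert (0 < INR N) by lra.
    assert (2*PI < INR N * m).
    { replace (2*PI) with (2*PI/m*m) by (field; lra). apply Rmult_lt_compat_r; lra. }
    apply (Rmult_lt_reg_l (INR N)); [lra|].
    replace (INR N * (2 * PI / INR N)) with (2*PI) by (field; lra). lra. }
  assert (Eq : INR q * th = phi + 2 * IZR p * PI) by (unfold phi; ring).
  rewrite Eq, (Zper sin sin_period), (Zper cos cos_period).
  assert (Hnz : phi <> 0).
  { intro E0. apply (Hth (2 * p)%Z (Z.of_nat q)); [lia|].
    rewrite <- INR_IZR_INZ, mult_IZR. unfold phi in E0. nra. }
  assert (Hs : sin phi <> 0 /\ Rabs (sin phi) < Rabs phi).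
  { destruct (Rlt_or_le 0 phi) as [Hp|Hp].
    - assert (0 < sin phi) by (apply sin_gt_0; apply Rabs_def2 in Hphi; lra).
      pose proof (sin_lt_x phi Hp). rewrite !Rabs_pos_eq by lra. split; lra.
    - assert (phi < 0) by lra. apply Rabs_def2 in Hphi.
      assert (sin phi < 0) by (apply sin_lt_0_var; lra).
      pose proof (sin_lt_x (- phi) ltac:(lra)). rewrite sin_neg in *.
      rewrite Rabs_left by lra. rewrite (Rabs_left phi) by lra. split; lra. }
  destruct Hs as [Hs1 Hs2].
  split; [auto|split]; [lra|].
  apply Rabs_def2 in Hphi.
  assert (0 <= cos phi) by (apply cos_ge_0; lra).
  pose proof (COS_bound phi). pose proof (sin2_cos2 phi). unfold Rsqr in *.
  assert (Hsq : sin phi * sin phi < phi * phi).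
  { assert (HH : Rabs (sin phi) * Rabs (sin phi) < Rabs phi * Rabs phi).
    { apply Rmult_le_0_lt_compat; auto; apply Rabs_pos. }
    rewrite <- !Rabs_mult in HH. rewrite !Rabs_pos_eq in HH by nra. auto. }
  rewrite Rabs_left1 by lra.
  assert (1 - cos phi <= sin phi * sin phi) by nra.
  assert (phi * phi <= Rabs phi) by (destruct (Rlt_or_le 0 phi); [rewrite Rabs_pos_eq|rewrite Rabs_left1]; nra).
  apply Rabs_def2 in Hd. nra.
Qed.

Fixpoint Cpw (z : Cplx) (k : nat) : Cplx :=
  match k with O => Cplx1 | S k => Cmul z (Cpw z k) end.

Lemma Tpw {n} (a b : Cn n) om mu t k : Tset a b om mu t -> Tset a b om mu (Cmul (Cpw om k) t).
Proof.
  intro H; induction k; simpl.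
  - replace (Cmul Cplx1 t) with t by ring; auto.
  - replace (Cmul (Cmul om (Cpw om k)) t) with (Cmul om (Cmul (Cpw om k) t)) by ring.
    apply Trot; auto.
Qed.

Lemma Tpwi {n} (a b : Cn n) om mu t k : Tset a b om mu t -> Tset a b om mu (Cmul (Cpw (Cinv om) k) t).
Proof.
  intro H; induction k; simpl.
  - replace (Cmul Cplx1 t) with t by ring; auto.
  - replace (Cmul (Cmul (Cinv om) (Cpw (Cinv om) k)) t) with (Cmul (Cinv om) (Cmul (Cpw (Cinv om) k) t)) by ring.
    apply Troti; auto.
Qed.

Lemma Cpw_inv om k : om <> Cplx0 -> Cmul (Cpw om k) (Cpw (Cinv om) k) = Cplx1.
Proof.
  intro H; induction k; simpl.
  - ring.
  - replace (Cmul (Cmul om (Cpw om k)) (Cmul (Cinv om) (Cpw (Cinv om) k)))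
      with (Cmul (Cmul om (Cinv om)) (Cmul (Cpw om k) (Cpw (Cinv om) k))) by ring.
    rewrite IHk. field. auto.
Qed.

Definition Tr {n} (a b : Cn n) om mu x : Prop :=
  forall t, Tset a b om mu t -> Tset a b om mu (Cadd t x).

Lemma Trpw {n} (a b : Cn n) om mu k : om <> Cplx0 -> mu <> Cplx0 ->
  Tr a b om mu (Cmul (Cpw om k) (tv om mu)) /\ Tr a b om mu (Copp (Cmul (Cpw om k) (tv om mu))).
Proof.
  intros Ho Hm; split; intros t H.
  - apply (Tpwi _ _ _ _ _ k), Tplus, (Tpw _ _ _ _ _ k) in H; auto.
    replace (Cadd t (Cmul (Cpw om k) (tv om mu))) with
      (Cmul (Cpw om k) (Cadd (Cmul (Cpw (Cinv om) k) t) (tv om mu))); auto.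
    transitivity (Cadd (Cmul (Cmul (Cpw om k) (Cpw (Cinv om) k)) t) (Cmul (Cpw om k) (tv om mu)));
      [ring|]. rewrite Cpw_inv by auto. ring.
  - apply (Tpwi _ _ _ _ _ k), Tminus, (Tpw _ _ _ _ _ k) in H; auto.
    replace (Cadd t (Copp (Cmul (Cpw om k) (tv om mu)))) with
      (Cmul (Cpw om k) (Csub (Cmul (Cpw (Cinv om) k) t) (tv om mu))); auto.
    transitivity (Csub (Cmul (Cmul (Cpw om k) (Cpw (Cinv om) k)) t) (Cmul (Cpw om k) (tv om mu)));
      [ring|]. rewrite Cpw_inv by auto. ring.
Qed.

Lemma Tr_add {n} (a b : Cn n) om mu x y : Tr a b om mu x -> Tr a b om mu y -> Tr a b om mu (Cadd x y).
Proof.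
  intros Hx Hy t H. replace (Cadd t (Cadd x y)) with (Cadd (Cadd t x) y) by ring. auto.
Qed.

Lemma Tr_N {n} (a b : Cn n) om mu x : Tr a b om mu x -> forall k, Tr a b om mu (Cmul (INR k, 0) x).
Proof.
  intros Hx k; induction k as [|k IH].
  - intros t H. replace (Cadd t (Cmul (INR 0, 0) x)) with t; auto.
    destruct t, x; apply Cplx_eq; simpl; ring.
  - replace (Cmul (INR (S k), 0) x) with (Cadd (Cmul (INR k, 0) x) x).
    + apply Tr_add; auto.
    + rewrite S_INR; destruct x; apply Cplx_eq; simpl; ring.
Qed.

Lemma Tr_Z {n} (a b : Cn n) om mu x : Tr a b om mu x -> Tr a b om mu (Copp x) ->
  forall p : Z, Tr a b om mu (Cmul (IZR p, 0) x).
Proof.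
  intros H1 H2 p. destruct (Z_le_gt_dec 0 p) as [Hp|Hp].
  - rewrite <- (Z2Nat.id p Hp), <- INR_IZR_INZ. apply Tr_N; auto.
  - replace p with (- Z.of_nat (Z.to_nat (- p)))%Z by lia.
    rewrite opp_IZR, <- INR_IZR_INZ.
    replace (Cmul (- INR (Z.to_nat (- p)), 0) x) with (Cmul (INR (Z.to_nat (- p)), 0) (Copp x)).
    + apply Tr_N; auto.
    + destruct x; apply Cplx_eq; simpl; ring.
Qed.

Lemma Cpw_expi th k : Cpw (Cexpi th) k = Cexpi (INR k * th).
Proof.
  induction k as [|k IH]; simpl Cpw.
  - unfold Cexpi, Cplx1; simpl. rewrite Rmult_0_l, cos_0, sin_0; auto.
  - rewrite IH. rewrite S_INR. unfold Cexpi, Cmul; simpl.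
    replace ((INR k + 1) * th) with (th + INR k * th) by ring.
    rewrite cos_plus, sin_plus. f_equal; ring.
Qed.

Lemma Cmul_nz x y : x <> Cplx0 -> y <> Cplx0 -> Cmul x y <> Cplx0.
Proof.
  intros Hx Hy E. apply Hy.
  transitivity (Cmul (Cinv x) (Cmul x y)); [field; auto|]. rewrite E. ring.
Qed.

Lemma absb a b x y e : Rabs a <= e -> Rabs b <= e -> Rabs (a * x + b * y) <= e * (Rabs x + Rabs y).
Proof.
  intros Ha Hb. eapply Rle_trans; [apply Rabs_triang|]. rewrite !Rabs_mult.
  pose proof (Rabs_pos x); pose proof (Rabs_pos y).
  assert (Rabs a * Rabs x <= e * Rabs x) by (apply Rmult_le_compat_r; auto).
  assert (Rabs b * Rabs y <= e * Rabs y) by (apply Rmult_le_compat_r; auto).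
  lra.
Qed.

Lemma dense_T {n} (a b : Cn n) th mu : not_in_piQ th -> mu <> Cplx0 -> mu <> Cplx1 ->
  forall t0 eta, 0 < eta -> exists s, Tset a b (Cexpi th) mu s /\
    Rabs (fst (Csub t0 s)) < eta /\ Rabs (snd (Csub t0 s)) < eta.
Proof.
  intros Hth Hm0 Hm1 t0 eta Heta.
  set (om := Cexpi th).
  assert (Hsin : sin th <> 0).
  { intro E; destruct (sin_eq_0_0 th E) as [k Hk]. apply (Hth k 1%Z); [lia|]. rewrite Hk; ring. }
  assert (Hom : om <> Cplx0) by (intro E; unfold om, Cexpi, Cplx0 in E; injection E; intros; auto).
  assert (H10 : Cplx1 <> Cplx0) by (unfold Cplx1, Cplx0; intro E; inversion E; lra).
  assert (Hom1 : Csub om Cplx1 <> Cplx0).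
  { intro E; unfold om, Cexpi, Csub, Cadd, Copp, Cplx1, Cplx0 in E; simpl in E; inversion E; lra. }
  assert (Hmu1 : Csub Cplx1 mu <> Cplx0).
  { intro E; apply Hm1; transitivity (Csub Cplx1 (Csub Cplx1 mu)); [ring|rewrite E; ring]. }
  assert (Hmi : Cinv mu <> Cplx0).
  { intro E; apply H10. transitivity (Cmul mu (Cinv mu)); [field; auto|rewrite E; ring]. }
  set (v := tv om mu).
  assert (Hv : v <> Cplx0) by (unfold v, tv; repeat apply Cmul_nz; auto).
  set (V := Rabs (fst v) + Rabs (snd v) + 1).
  assert (HV : 0 < V) by (unfold V; pose proof (Rabs_pos (fst v)); pose proof (Rabs_pos (snd v)); lra).
  set (eta' := eta / (4 * V)).
  assert (Heta' : 0 < eta') by (unfold eta'; apply Rdiv_lt_0_compat; lra).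
  assert (HeV : eta' * V = eta / 4) by (unfold eta'; field; lra).
  destruct (small_rot th Hth eta' Heta') as [q [Hs0 [Hs Hc]]].
  set (w := Csub (Cmul (Cpw om q) v) (Cmul (Cpw om 0) v)).
  set (u := Csub (Cmul (Cpw om (S q)) v) (Cmul (Cpw om 1) v)).
  assert (Trw : Tr a b om mu w /\ Tr a b om mu (Copp w)).
  { destruct (Trpw a b om mu q Hom Hm0) as [A1 A2]. destruct (Trpw a b om mu 0 Hom Hm0) as [B1 B2].
    split; [apply Tr_add; auto|].
    replace (Copp w) with (Cadd (Copp (Cmul (Cpw om q) (tv om mu))) (Cmul (Cpw om 0) (tv om mu)))
      by (unfold w, v; ring).
    apply Tr_add; auto. }
  assert (Tru : Tr a b om mu u /\ Tr a b om mu (Copp u)).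
  { destruct (Trpw a b om mu (S q) Hom Hm0) as [A1 A2]. destruct (Trpw a b om mu 1 Hom Hm0) as [B1 B2].
    split; [apply Tr_add; auto|].
    replace (Copp u) with (Cadd (Copp (Cmul (Cpw om (S q)) (tv om mu))) (Cmul (Cpw om 1) (tv om mu)))
      by (unfold u, v; ring).
    apply Tr_add; auto. }
  assert (Ew : w = Cmul (Csub (Cexpi (INR q * th)) Cplx1) v).
  { unfold w. rewrite <- Cpw_expi. fold om. simpl Cpw. ring. }
  assert (Eu : u = Cmul om w).
  { unfold u, w. simpl Cpw. ring. }
  set (c := cos (INR q * th)) in *. set (s := sin (INR q * th)) in *.
  assert (Ew1 : fst w = (c - 1) * fst v + (- s) * snd v)
    by (rewrite Ew; unfold Cmul, Csub, Cadd, Copp, Cexpi, Cplx1; simpl; fold c s; ring).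
  assert (Ew2 : snd w = (c - 1) * snd v + s * fst v)
    by (rewrite Ew; unfold Cmul, Csub, Cadd, Copp, Cexpi, Cplx1; simpl; fold c s; ring).
  assert (Eu1 : fst u = cos th * fst w + (- sin th) * snd w)
    by (rewrite Eu; unfold om, Cmul, Cexpi; simpl; ring).
  assert (Eu2 : snd u = sin th * fst w + cos th * snd w)
    by (rewrite Eu; unfold om, Cmul, Cexpi; simpl; ring).
  assert (Bw1 : Rabs (fst w) <= eta' * (Rabs (fst v) + Rabs (snd v))).
  { rewrite Ew1. apply absb; [lra|rewrite Rabs_Ropp; lra]. }
  assert (Bw2 : Rabs (snd w) <= eta' * (Rabs (fst v) + Rabs (snd v))).
  { rewrite Ew2, (Rplus_comm (Rabs (fst v)) (Rabs (snd v))). apply absb; lra. }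
  pose proof (COS_bound th); pose proof (SIN_bound th).
  assert (Bu1 : Rabs (fst u) <= 1 * (Rabs (fst w) + Rabs (snd w))).
  { rewrite Eu1. apply absb; apply Rabs_le; lra. }
  assert (Bu2 : Rabs (snd u) <= 1 * (Rabs (fst w) + Rabs (snd w))).
  { rewrite Eu2. apply absb; apply Rabs_le; lra. }
  assert (Hwnz : w <> Cplx0).
  { rewrite Ew. apply Cmul_nz; auto. intro E; unfold Cexpi, Csub, Cadd, Copp, Cplx1, Cplx0 in E;
    simpl in E; injection E; intros; apply Hs0; unfold s; lra. }
  pose proof (Cnz w Hwnz) as Hw2.
  set (D := fst w * snd u - snd w * fst u).
  assert (HD : D <> 0).
  { assert (HDe : D = sin th * (fst w ^ 2 + snd w ^ 2)) by (unfold D; rewrite Eu1, Eu2; ring).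
    rewrite HDe. apply Rmult_integral_contrapositive; auto. }
  set (al := (fst t0 * snd u - snd t0 * fst u) / D).
  set (be := (fst w * snd t0 - snd w * fst t0) / D).
  assert (Ht1 : fst t0 = al * fst w + be * fst u) by (unfold al, be, D in *; field; auto).
  assert (Ht2 : snd t0 = al * snd w + be * snd u) by (unfold al, be, D in *; field; auto).
  destruct (Ipart_bounds al) as [Al1 Al2]. destruct (Ipart_bounds be) as [Be1 Be2].
  clearbody al be.
  set (A := Int_part al) in *. set (B := Int_part be) in *.
  exists (Cadd (Cadd Cplx0 (Cmul (IZR A, 0) w)) (Cmul (IZR B, 0) u)).
  split.
  { apply (Tr_Z a b om mu u (proj1 Tru) (proj2 Tru) B).
    apply (Tr_Z a b om mu w (proj1 Trw) (proj2 Trw) A). apply T0. }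
  assert (F1 : fst (Csub t0 (Cadd (Cadd Cplx0 (Cmul (IZR A, 0) w)) (Cmul (IZR B, 0) u)))
     = (al - IZR A) * fst w + (be - IZR B) * fst u).
  { unfold Csub, Cadd, Copp, Cmul, Cplx0; cbn [fst snd]. rewrite Ht1. ring. }
  assert (F2 : snd (Csub t0 (Cadd (Cadd Cplx0 (Cmul (IZR A, 0) w)) (Cmul (IZR B, 0) u)))
     = (al - IZR A) * snd w + (be - IZR B) * snd u).
  { unfold Csub, Cadd, Copp, Cmul, Cplx0; cbn [fst snd]. rewrite Ht2. ring. }
  rewrite F1, F2.
  assert (HA : Rabs (al - IZR A) <= 1) by (apply Rabs_le; lra).
  assert (HB : Rabs (be - IZR B) <= 1) by (apply Rabs_le; lra).
  assert (Hvv : eta' * (Rabs (fst v) + Rabs (snd v)) <= eta / 4).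
  { rewrite <- HeV. apply Rmult_le_compat_l; unfold V; lra. }
  split.
  - eapply Rle_lt_trans; [apply absb; eauto|]. lra.
  - eapply Rle_lt_trans; [apply absb; eauto|]. lra.
Qed.

Lemma Cmod_mul x y : Cmod (Cmul x y) = Cmod x * Cmod y.
Proof.
  unfold Cmod. rewrite <- sqrt_mult_alt by (apply Rplus_le_le_0_compat; apply pow2_ge_0).
  f_equal. unfold Cmul; cbn [fst snd]. ring.
Qed.

Lemma Rabs_sq x : Rabs x * Rabs x = x * x.
Proof. rewrite <- Rabs_mult. apply Rabs_pos_eq. nra. Qed.

Lemma Cmod_le z : Cmod z <= Rabs (fst z) + Rabs (snd z).
Proof.
  unfold Cmod. pose proof (Rabs_pos (fst z)); pose proof (Rabs_pos (snd z)).
  rewrite <- (sqrt_Rsqr (Rabs (fst z) + Rabs (snd z))) by lra.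
  apply sqrt_le_1_alt. unfold Rsqr. pose proof (Rabs_sq (fst z)); pose proof (Rabs_sq (snd z)).
  nra.
Qed.

Lemma fst_le z : Rabs (fst z) <= Cmod z.
Proof.
  unfold Cmod. rewrite <- sqrt_Rsqr_abs. apply sqrt_le_1_alt. unfold Rsqr.
  pose proof (pow2_ge_0 (snd z)). nra.
Qed.

Lemma snd_le z : Rabs (snd z) <= Cmod z.
Proof.
  unfold Cmod. rewrite <- sqrt_Rsqr_abs. apply sqrt_le_1_alt. unfold Rsqr.
  pose proof (pow2_ge_0 (fst z)). nra.
Qed.

Lemma Cmod_pos z : 0 <= Cmod z.
Proof. apply sqrt_pos. Qed.

Lemma fin_bound n (g : Fin.t n -> R) : exists K, 0 <= K /\ forall i, g i <= K.
Proof.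
  induction n as [|n IH].
  - exists 0; split; [lra|]. intro i; apply (Fin.case0 (fun i => g i <= 0) i).
  - destruct (IH (fun i => g (Fin.FS i))) as [K [HK0 HK]].
    exists (Rmax K (g Fin.F1)); split.
    + eapply Rle_trans; [exact HK0|apply Rmax_l].
    + intro i. apply (Fin.caseS' i (fun i => g i <= Rmax K (g Fin.F1))).
      * apply Rmax_r.
      * intro p; eapply Rle_trans; [apply HK|apply Rmax_l].
Qed.

Lemma zero_small x M : 0 <= M -> (forall e, 0 < e -> Rabs x <= e * (1 + M)) -> x = 0.
Proof.
  intros HM H. destruct (Req_dec x 0) as [|Hx]; auto.
  pose proof (Rabs_pos_lt x Hx).
  specialize (H (Rabs x / (2 * (1 + M))) ltac:(apply Rdiv_lt_0_compat; lra)).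
  replace (Rabs x / (2 * (1 + M)) * (1 + M)) with (Rabs x / 2) in H by (field; lra). lra.
Qed.

Theorem proposition3p2 (n : nat) (theta : R) (mu : Cplx) (a b : Cn n) :
  not_in_piQ theta -> mu <> Cplx0 -> mu <> Cplx1 -> a <> b ->
  forall z : Cn n,
    closure (orbit (gen_group a (Cexpi theta) b mu) a) z <->
    exists t : Cplx, z = vadd (vscal t (vsub b a)) a.
Proof.
  intros Hth Hm0 Hm1 Hab z; split.
  - intro Hcl.
    assert (Hi : exists i0, a i0 <> b i0).
    { apply NNPP; intro Hn; apply Hab; apply functional_extensionality; intro i.
      apply NNPP; intro Hne; apply Hn; eauto. }
    destruct Hi as [i0 Hi0].
    assert (Hd : Csub (b i0) (a i0) <> Cplx0).
    { intro E; apply Hi0. transitivity (Csub (b i0) (Csub (b i0) (a i0))); [ring|rewrite E; ring]. }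
    exists (Cmul (Csub (z i0) (a i0)) (Cinv (Csub (b i0) (a i0)))).
    apply functional_extensionality; intro j.
    set (Y := vadd (vscal (Cmul (Csub (z i0) (a i0)) (Cinv (Csub (b i0) (a i0)))) (vsub b a)) a j).
    assert (HE : Csub (z j) Y = Cplx0).
    { set (M := Cmod (Cinv (Csub (b i0) (a i0))) * Cmod (Csub (b j) (a j))).
      assert (HM : 0 <= M) by (apply Rmult_le_pos; apply Cmod_pos).
      assert (Key : forall e, 0 < e -> Rabs (fst (Csub (z j) Y)) <= e * (1 + M) /\
                                      Rabs (snd (Csub (z j) Y)) <= e * (1 + M)).
      { intros e He. destruct (Hcl e He) as [w [[h [Hh Hw]] Hclose]].
        destruct (Gline a b _ _ h Hh) as [s Hs]. rewrite Hs in Hw. subst w.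
        set (ee := fun k => Csub (z k) (L a b s k)) in *.
        assert (Eq : Csub (z j) Y = Csub (ee j)
                 (Cmul (Cmul (ee i0) (Cinv (Csub (b i0) (a i0)))) (Csub (b j) (a j)))).
        { unfold ee, Y, L, vadd, vscal, vsub. field. auto. }
        set (X := Cmul (Cmul (ee i0) (Cinv (Csub (b i0) (a i0)))) (Csub (b j) (a j))) in Eq.
        assert (HX : Cmod X <= e * M).
        { unfold X, M. rewrite !Cmod_mul. rewrite Rmult_assoc.
          apply Rmult_le_compat_r; [apply Rmult_le_pos; apply Cmod_pos|].
          left; apply Hclose. }
        assert (He1 : Cmod (ee j) < e) by apply Hclose.
        rewrite Eq. unfold Csub, Cadd, Copp; cbn [fst snd].
        pose proof (fst_le (ee j)); pose proof (snd_le (ee j)); pose proof (fst_le X); pose proof (snd_le X).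
        pose proof (Rabs_triang (fst (ee j)) (- fst X)); pose proof (Rabs_triang (snd (ee j)) (- snd X)).
        pose proof (Rabs_Ropp (fst X)); pose proof (Rabs_Ropp (snd X)). split; lra. }
      apply Cplx_eq; unfold Cplx0; cbn [fst snd]; apply (zero_small _ M HM); intros e He; apply Key; auto. }
    transitivity (Cadd (Csub (z j) Y) Y); [ring|]. rewrite HE. unfold Y. ring.
  - intros [t ->] eps Heps.
    destruct (fin_bound n (fun i => Cmod (Csub (b i) (a i)))) as [K [HK0 HK]].
    set (eta := eps / (2 * (K + 1))).
    assert (Heta : 0 < eta) by (unfold eta; apply Rdiv_lt_0_compat; lra).
    destruct (dense_T a b theta mu Hth Hm0 Hm1 t eta Heta) as [s [Ts [B1 B2]]].
    exists (L a b s); split; [exact Ts|].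
    intro i.
    replace (Csub (vadd (vscal t (vsub b a)) a i) (L a b s i))
      with (Cmul (Csub t s) (Csub (b i) (a i))) by (unfold L, vadd, vscal, vsub; ring).
    rewrite Cmod_mul.
    assert (Cmod (Csub t s) < 2 * eta) by (pose proof (Cmod_le (Csub t s)); lra).
    specialize (HK i); cbn beta in HK.
    pose proof (Cmod_pos (Csub (b i) (a i))).
    apply Rle_lt_trans with (Cmod (Csub t s) * (K + 1)).
    + apply Rmult_le_compat_l; [apply Cmod_pos|lra].
    + replace eps with (2 * eta * (K + 1)) by (unfold eta; field; lra).
      apply Rmult_lt_compat_r; lra.
Qed.
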